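(* Let $V$ be a set of truth values containing distinct elements $1$ and $0$, equipped with a partial order $\leq$ (reflexive, transitive, antisymmetric) such that $0\leq x\leq 1$ for all $x\in V$. Define the order-theoretic truth-relation $\models_{\leq}\subseteq\mathcal{P}(V)\times\mathcal{P}(V)$ by: $\gamma\models_{\leq}\delta$ iff ($\exists x\in\gamma,\exists y\in\delta: x\leq y$) or $0\in\gamma$ or $1\in\delta$. Then $\models_{\leq}$ equals the intersection of all pure consequence relations $\models_{\mathcal{D},\mathcal{D}}$, where $\mathcal{D}$ ranges over the sets of designated values that are upsets for $\leq$.
   Context: A set of designated values is a subset $\mathcal{D}\subseteq V$ with $1\in\mathcal{D}$ and $0\notin\mathcal{D}$. For sets of designated values $\mathcal{D}_p,\mathcal{D}_c$, the mixed consequence truth-relation $\models_{\mathcal{D}_p,\mathcal{D}_c}$ on $\mathcal{P}(V)\times\mathcal{P}(V)$ is defined by $\gamma\models_{\mathcal{D}_p,\mathcal{D}_c}\delta$ iff ($\gamma\subseteq\mathcal{D}_p$ implies $\delta\cap\mathcal{D}_c\neq\emptyset$); it is pure when $\mathcal{D}_p=\mathcal{D}_c$. A set $U\subseteq V$ is an upset for $\leq$ if $x\in U$ and $x\leq y$ imply $y\in U$. *)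

(* Defs.v *)
Definition vset (V : Type) := V -> Prop.

Definition designated {V : Type} (one zero : V) (D : vset V) : Prop :=
  D one /\ ~ D zero.

Definition mixed_cons {V : Type} (Dp Dc : vset V) (g d : vset V) : Prop :=
  (forall x, g x -> Dp x) -> exists y, d y /\ Dc y.

Definition pure_cons {V : Type} (D : vset V) (g d : vset V) : Prop :=
  mixed_cons D D g d.

Definition upset {V : Type} (le : V -> V -> Prop) (U : vset V) : Prop :=
  forall x y, U x -> le x y -> U y.

Definition order_cons {V : Type} (le : V -> V -> Prop) (one zero : V)
  (g d : vset V) : Prop :=
  (exists x y, g x /\ d y /\ le x y) \/ g zero \/ d one.

(* Main.v *)
Require Import Defs.
From Stdlib Require Import Classical.

Theorem theorem2p14 (V : Type) (le : V -> V -> Prop) (one zero : V)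
  (Hdist : one <> zero)
  (Hrefl : forall x, le x x)
  (Htrans : forall x y z, le x y -> le y z -> le x z)
  (Hanti : forall x y, le x y -> le y x -> x = y)
  (Hbot : forall x, le zero x)
  (Htop : forall x, le x one) :
  forall g d : vset V,
    order_cons le one zero g d <->
    (forall D : vset V, designated one zero D -> upset le D -> pure_cons D g d).
Proof.
  intros g d; split.
  - intros H D [D1 D0] HU Hg.
    destruct H as [[x [y [gx [dy lxy]]]] | [g0 | d1]].
    + exists y; split; [exact dy | exact (HU x y (Hg x gx) lxy)].
    + exfalso; exact (D0 (Hg zero g0)).
    + exists one; split; assumption.
  - intros H.
    destruct (classic (g zero)) as [g0 | ng0]; [right; left; exact g0|].
    set (D := fun y => y = one \/ exists x, g x /\ le x y).
    assert (Hdes : designated one zero D).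
    { split; [left; reflexivity|].
      intros [e | [x [gx lx]]]; [congruence|].
      apply ng0. rewrite <- (Hanti x zero lx (Hbot x)). exact gx. }
    assert (Hup : upset le D).
    { intros x y [e | [z [gz lz]]] lxy.
      - subst x. left. apply Hanti; auto.
      - right. exists z. split; [exact gz | eapply Htrans; eauto]. }
    destruct (H D Hdes Hup) as [y [dy [e | [x [gx lx]]]]].
    + intros x gx. right. exists x. split; auto.
    + subst y. right; right; exact dy.
    + left. exists x, y. auto.
Qed.
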